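(* Let $R$ be a tolerance relation on $X=\{1,\ldots,n\}$ and assume that every $a\in A(R)$ with $a\succeq0$ is of the form $a=\sum_{i=1}^k b_i\star b_i^*$ for some $b_1,\ldots,b_k\in A(R)$. Then the graph of $R$ has a dominant vertex in each connected component.
   Context: A tolerance relation is a reflexive and symmetric relation; its graph has an edge between $i\ne j$ whenever $(i,j)\in R$; a dominant vertex is a vertex adjacent to all other vertices of its connected component. $T(b)=\sum_{(i,j)\in R}E_{ii}bE_{jj}$ for $b\in M_n(\mathbb{C})$, $A(R)=T(M_n(\mathbb{C}))$ with product $a\star b=T(ab)$ and involution the conjugate transpose. For $a\in A(R)$, $a\succeq0$ means $a=T(b)$ for some positive semidefinite $b\in M_n(\mathbb{C})$. *)

(* Defs.v *)
(* Complex numbers are modelled as R[i] = complex R for an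
   arbitrary R : realType (so in particular the classical reals). *)
From HB Require Import structures.
From mathcomp Require Import all_boot all_order all_algebra.
From mathcomp Require Import reals.
From mathcomp Require Export complex.
Set Implicit Arguments. Unset Strict Implicit. Unset Printing Implicit Defensive.
Import Order.TTheory GRing.Theory Num.Theory.
Local Open Scope ring_scope.

Section Tolerance.
Variables (C : numClosedFieldType) (n : nat).

Definition tolerance (R : rel 'I_n) : Prop := reflexive R /\ symmetric R.

(* T(b) = \sum_{(i,j) in R} E_ii b E_jj : keep the (i,j) entry iff (i,j) in R *)
Definition Tmap (R : rel 'I_n) (b : 'M[C]_n) : 'M[C]_n :=
  \matrix_(i, j) (if R i j then b i j else 0).

Definition inA (R : rel 'I_n) (a : 'M[C]_n) : Prop := exists b, a = Tmap R b.

Definition starA (R : rel 'I_n) (a b : 'M[C]_n) : 'M[C]_n := Tmap R (a *m b).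

Definition adj (a : 'M[C]_n) : 'M[C]_n := (map_mx Num.conj a)^T.

Definition psd (b : 'M[C]_n) : Prop :=
  adj b = b /\ forall v : 'cV[C]_n, 0 <= ((map_mx Num.conj v)^T *m b *m v) 0 0.

Definition psdA (R : rel 'I_n) (a : 'M[C]_n) : Prop := exists b, psd b /\ a = Tmap R b.

Definition sosA (R : rel 'I_n) (a : 'M[C]_n) : Prop :=
  exists k (b : 'I_k -> 'M[C]_n),
    (forall i, inA R (b i)) /\ a = \sum_(i < k) starA R (b i) (adj (b i)).

End Tolerance.

Definition graph_edge n (R : rel 'I_n) : rel 'I_n := fun i j => (i != j) && R i j.

Definition dominant n (R : rel 'I_n) (v : 'I_n) : Prop :=
  forall w, connect (graph_edge R) v w -> w != v -> graph_edge R v w.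

Definition dominant_in_each_component n (R : rel 'I_n) : Prop :=
  forall x : 'I_n, exists2 v, connect (graph_edge R) x v & dominant R v.

(* Main.v *)
Require Import Defs.
From HB Require Import structures.
From mathcomp Require Import all_boot all_order all_algebra.
From mathcomp Require Import reals.
From mathcomp Require Import complex.
From Stdlib Require Import Classical.
Set Implicit Arguments. Unset Strict Implicit. Unset Printing Implicit Defensive.
Import Order.TTheory GRing.Theory Num.Theory Num.Def.
Local Open Scope ring_scope.


Section Core.
Variables (C : numClosedFieldType) (n : nat).

Definition cjr (x : 'rV[C]_n) : 'cV[C]_n := (map_mx conjC x)^T.
Definition qf (H : 'M[C]_n) (x : 'rV[C]_n) : C := (x *m H *m cjr x) 0 0.
Definition n2 (x : 'rV[C]_n) : C := \sum_i `|x 0 i| ^+ 2.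

Lemma qfE H x : qf H x = \sum_i \sum_j x 0 i * H i j * (x 0 j)^*.
Proof.
rewrite /qf mxE [RHS]exchange_big /=; apply: eq_bigr => j _.
rewrite mxE big_distrl /=; apply: eq_bigr => i _; by rewrite !mxE.
Qed.

Lemma qf_diag d x : qf (diag_mx d) x = \sum_i d 0 i * `|x 0 i| ^+ 2.
Proof.
rewrite qfE; apply: eq_bigr => i _.
rewrite (bigD1 i) //= big1 ?addr0; last first.
  by move=> j /negPf ji; rewrite !mxE eq_sym ji mulr0n mulr0 mul0r.
by rewrite !mxE eqxx mulr1n normCK mulrCA mulrA.
Qed.

Lemma n2_ge0 x : 0 <= n2 x.
Proof. by apply: sumr_ge0 => i _; rewrite exprn_ge0. Qed.

Lemma qf1 x : qf 1%:M x = n2 x.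
Proof.
have -> : (1%:M : 'M[C]_n) = diag_mx (const_mx 1).
  by apply/matrixP => i j; rewrite !mxE.
by rewrite qf_diag; apply: eq_bigr => i _; rewrite mxE mul1r.
Qed.

Lemma cjr_mul (P : 'M[C]_n) x : P *m cjr x = cjr (x *m (map_mx conjC (P^T))).
Proof.
rewrite /cjr map_mxM trmx_mul map_trmx.
rewrite -map_mx_comp (map_mx_id (@conjCK _)) trmxK //.
Qed.

Lemma qf_conj P M x : qf (((map_mx conjC (P^T))) *m M *m P) x = qf M (x *m (map_mx conjC (P^T))).
Proof. by rewrite /qf !mulmxA -[_ *m P *m _]mulmxA cjr_mul. Qed.

Lemma exists_max (f : 'I_n -> C) (i0 : 'I_n) :
  (forall i, f i \is Num.real) -> exists i, forall j, f j <= f i.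
Proof.
move=> fr.
suff [i Hi] : exists i, forall j, j \in enum 'I_n -> f j <= f i.
  by exists i => j; apply: Hi; rewrite mem_enum.
elim: (enum 'I_n) => [|a s [i Hi]]; first by exists i0.
have /orP[le|le] := real_leVge (fr a) (fr i).
  by exists i => j; rewrite inE => /orP[/eqP->//|]; apply: Hi.
exists a => j; rewrite inE => /orP[/eqP->//|/Hi] h.
exact: le_trans h le.
Qed.


Lemma n2_conj (P : 'M[C]_n) x : map_mx conjC (P^T) *m P = 1%:M ->
  n2 x = n2 (x *m map_mx conjC (P^T)).
Proof.
move=> PtP; rewrite -!qf1 -qf_conj; congr qf.
by rewrite mulmx1.
Qed.

Lemma core (H : 'M[C]_n) (i0 : 'I_n) : H \is hermsymmx ->
 exists l, [/\ l \is Num.real, exists2 v : 'rV_n, v != 0 & v *m H = l *: v,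
   forall x, qf H x <= l * n2 x &
   forall x, qf H x = l * n2 x -> x *m H = l *: x].
Proof.
move=> hH.
have /orthomx_spectralP eH := hermitian_normalmx hH.
have Pu := spectral_unitarymx H.
have dr := hermitian_spectral_diag_real hH.
set P := spectralmx H in eH Pu; set d := spectral_diag H in eH dr.
have dri i : d 0 i \is Num.real by apply: (mxOverP dr).
have invP : invmx P = map_mx conjC (P^T) := invmx_unitary Pu.
have HP : H = map_mx conjC (P^T) *m diag_mx d *m P by rewrite {1}eH invP.
have PtP : map_mx conjC (P^T) *m P = 1%:M.
  by rewrite -invP mulVmx // unitarymx_unit.
have PPt : P *m map_mx conjC (P^T) = 1%:M := unitarymxP Pu.
have [i1 Hi1] := exists_max i0 dri.
exists (d 0 i1); split.
- exact: dri.
- exists (row i1 P).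
    apply/eqP => r0; have /matrixP/(_ i1 i1) := PPt.
    rewrite !mxE eqxx big1 => [/eqP|j _]; first by rewrite eq_sym oner_eq0.
    have := congr1 (fun r : 'rV_n => r 0 j) r0; rewrite !mxE => ->.
    by rewrite mul0r.
  rewrite -row_mul HP !mulmxA PPt mul1mx mul_diag_mx.
  by apply/rowP => j; rewrite !mxE.
- move=> x; rewrite HP qf_conj qf_diag (n2_conj x PtP) /n2 mulr_sumr.
  apply: ler_sum => i _; apply: ler_wpM2r => //.
  by rewrite exprn_ge0.
- move=> x E.
  have [y yE] : exists y, x *m map_mx conjC (P^T) = y by eexists.
  have E' : \sum_i (d 0 i1 - d 0 i) * `|y 0 i| ^+ 2 = 0.
    move: E; rewrite HP qf_conj qf_diag (n2_conj x PtP) /n2 mulr_sumr yE.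
    move=> E; under eq_bigr do rewrite mulrBl.
    by rewrite sumrB E subrr.
  have Hy : y *m diag_mx d = d 0 i1 *: y.
    apply/rowP => i; rewrite mul_mx_diag !mxE.
    have /psumr_eq0P /(_ E' i isT) : forall i, true -> 0 <= (d 0 i1 - d 0 i) * `|y 0 i| ^+ 2.
      by move=> j _; rewrite mulr_ge0 ?exprn_ge0 // subr_ge0.
    move=> /eqP; rewrite mulf_eq0 subr_eq0 => /orP[/eqP->|]; first by rewrite mulrC.
    by rewrite expf_eq0 /= normr_eq0 => /eqP->; rewrite mul0r mulr0.
  by rewrite HP !mulmxA yE Hy -yE -scalemxAl -mulmxA PtP mulmx1.
Qed.

End Core.


Section Graph.
Variables (C : numClosedFieldType) (n : nat) (R : rel 'I_n).
Hypothesis tol : tolerance R.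

Local Notation e := (graph_edge R).

Lemma Rrefl : reflexive R. Proof. by case: tol. Qed.
Lemma Rsym : symmetric R. Proof. by case: tol. Qed.

Lemma e_sym : symmetric e.
Proof. by move=> i j; rewrite /graph_edge eq_sym Rsym. Qed.

Lemma eR i j : e i j -> R i j. Proof. by case/andP. Qed.

Lemma Re_ i j : R i j -> i != j -> e i j.
Proof. by move=> r ne; rewrite /graph_edge ne r. Qed.

Lemma e_irr i : e i i = false.
Proof. by rewrite /graph_edge eqxx. Qed.

Lemma connect_Rsym i j : R i j -> connect e j i.
Proof.
move=> r; have [->|ne] := eqVneq i j; first exact: connect0.
by apply: connect1; rewrite e_sym; apply: Re_.
Qed.

Lemma connect_R i j : R i j -> connect e i j.
Proof. by move=> r; apply: connect_Rsym; rewrite Rsym. Qed.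

Lemma propagate (Q : 'I_n -> Prop) x y :
  (forall a b, Q a -> e a b -> Q b) -> connect e x y -> Q x -> Q y.
Proof.
move=> HQ /connectP [p pth ->]; elim: p x pth => //= a p IH x /andP[exa pth] Qx.
by apply: IH pth _; apply: HQ exa.
Qed.

Lemma nondom v : ~ dominant R v ->
  exists w, [/\ connect e v w, w != v & ~~ e v w].
Proof.
move=> nd; apply: NNPP => H; apply: nd => w c ne; apply/negPn/negP => ne'.
by apply: H; exists w.
Qed.

Lemma nondom_edge v : ~ dominant R v -> exists y, e v y.
Proof.
move=> /nondom [w [/connectP [[|y p] /= pth ->] ne _]].
  by rewrite eqxx in ne.
by case/andP: pth => evy _; exists y.
Qed.

Definition Amat (p : pred 'I_n) : 'M[C]_n :=
  \matrix_(i, j) ((p i && p j && e i j)%:R).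

Lemma Amat_herm p : Amat p \is hermsymmx.
Proof.
apply/is_hermitianmxP; rewrite expr0 scale1r.
apply/matrixP => i j; rewrite !mxE conjC_nat e_sym.
by rewrite (andbC (p i)).
Qed.

Lemma Amat_ge0 p i j : 0 <= Amat p i j.
Proof. by rewrite mxE ler0n. Qed.

Lemma qf_restr (p q : pred 'I_n) (x : 'rV[C]_n) :
  (forall a, x 0 a != 0 -> p a) -> (forall a, p a -> q a) ->
  qf (Amat q) x = qf (Amat p) x.
Proof.
move=> xp pq; rewrite !qfE; apply: eq_bigr => a _; apply: eq_bigr => b _.
have [xa0|/xp pa] := eqVneq (x 0 a) 0; first by rewrite xa0 !mul0r.
have [xb0|/xp pb] := eqVneq (x 0 b) 0; first by rewrite xb0 conjC0 !mulr0.
by rewrite !mxE pa pb !pq.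
Qed.


Lemma qf_eig (H : 'M[C]_n) x l : x *m H = l *: x -> qf H x = l * n2 x.
Proof. by move=> xH; rewrite /qf xH -scalemxAl mxE -qf1 /qf mulmx1. Qed.

Lemma n2_eq0 (x : 'rV[C]_n) : n2 x = 0 -> x = 0.
Proof.
move=> /psumr_eq0P H; apply/rowP => i; rewrite mxE.
have /eqP := H (fun i _ => exprn_ge0 2 (normr_ge0 (x 0 i))) i isT.
by rewrite expf_eq0 /= normr_eq0 => /eqP.
Qed.

Lemma n2_gt0 (x : 'rV[C]_n) : x != 0 -> 0 < n2 x.
Proof.
move=> nx; rewrite lt_def n2_ge0 andbT; apply/eqP => /n2_eq0 x0.
by rewrite x0 eqxx in nx.
Qed.

Lemma qf_lin a (H1 H2 : 'M[C]_n) x : qf (a *: H1 - H2) x = a * qf H1 x - qf H2 x.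
Proof. by rewrite /qf mulmxBr mulmxBl -scalemxAr -scalemxAl !mxE. Qed.

Lemma ge_term (I : finType) (F : I -> C) i : (forall j, 0 <= F j) -> F i <= \sum_j F j.
Proof. by move=> H; rewrite (bigD1 i) //= lerDl sumr_ge0. Qed.

Lemma sep (l : C) (G : 'I_n -> C -> Prop) : l \is Num.real ->
  (forall k t t', t <= t' -> G k t -> G k t') ->
  (forall k, exists2 mu, (mu \is Num.real) /\ mu < l & G k mu) ->
  exists t, [/\ t \is Num.real, t < l & forall k, G k t].
Proof.
move=> lr mono H.
suff [t [tr tl Ht]] : exists t, [/\ t \is Num.real, t < l & forall k, k \in enum 'I_n -> G k t].
  by exists t; split => // k; apply: Ht; rewrite mem_enum.
elim: (enum 'I_n) => [|a s [t [tr tl Ht]]].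
  by exists (l - 1); split => //; [rewrite rpredB // rpred1 | rewrite gtrDl ltrN10].
have [mu [mur mul] Gmu] := H a.
have /orP[le|le] := real_leVge tr mur.
  exists mu; split => // k; rewrite inE => /orP[/eqP->//|/Ht]; exact: mono.
exists t; split => // k; rewrite inE => /orP[/eqP->|/Ht//]; exact: mono Gmu.
Qed.

End Graph.

Section Comp.
Variables (C : numClosedFieldType) (n : nat) (R : rel 'I_n).
Hypothesis tol : tolerance R.
Local Notation e := (graph_edge R).
Variable x0 : 'I_n.
Hypothesis nd : forall v, connect e x0 v -> ~ dominant R v.

Definition Cs : pred 'I_n := fun y => connect e x0 y.

Lemma Cs_closed a b : Cs a -> e a b -> Cs b.
Proof. by move=> ca eab; apply: connect_trans ca (connect1 eab). Qed.

Lemma Cs_R a b : Cs a -> R a b -> Cs b.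
Proof. by move=> ca rab; apply: connect_trans ca (connect_R tol rab). Qed.

Local Notation A := (Amat C R Cs).

Lemma lam_pos l : l \is Num.real -> (forall x, qf A x <= l * n2 x) -> 0 < l.
Proof.
move=> lr H.
have [y exy] := nondom_edge (nd (connect0 _ x0)).
have h1 : 1 <= qf A (const_mx 1).
  rewrite qfE; apply: le_trans (ge_term x0 _); last first.
    by move=> a; apply: sumr_ge0 => b _; rewrite !mxE conjC1 mulr1 mul1r ler0n.
  apply: le_trans (ge_term y _); last first.
    by move=> b; rewrite !mxE conjC1 mulr1 mul1r ler0n.
  rewrite !mxE conjC1 mulr1 mul1r /Cs connect0 exy /=.
  by have := Cs_closed (connect0 _ x0) exy; rewrite /Cs => ->.
have h := le_trans h1 (H _).
rewrite real_ltNge ?rpred0 //; apply/negP => le.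
have h2 : l * n2 (const_mx 1 : 'rV[C]_n) <= 0 by rewrite mulr_le0_ge0 // n2_ge0.
by have := le_trans h h2; rewrite ler10.
Qed.


Lemma vsupp l (v : 'rV[C]_n) : l != 0 -> v *m A = l *: v -> forall j, ~~ Cs j -> v 0 j = 0.
Proof.
move=> l0 vA j nj; have := congr1 (fun r : 'rV_n => r 0 j) vA.
rewrite !mxE big1 => [/esym/eqP|i _]; last by rewrite mxE (negPf nj) andbF mulr0.
by rewrite mulf_eq0 (negPf l0) => /eqP.
Qed.

Definition pk k : pred 'I_n := fun i => Cs i && R k i.

Lemma mu_lt k l mu (w : 'rV[C]_n) : Cs k -> l \is Num.real ->
  (forall x, qf A x <= l * n2 x) ->
  (forall x, qf A x = l * n2 x -> x *m A = l *: x) ->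
  mu \is Num.real -> w != 0 -> w *m Amat C R (pk k) = mu *: w -> mu < l.
Proof.
move=> ck lr Hb Hk mur wn0 wH.
have lpos := lam_pos lr Hb.
rewrite real_ltNge //; apply/negP => le_lmu.
have mu0 : mu != 0 by apply/eqP => mu0; rewrite mu0 (lt_geF lpos) in le_lmu.
have wsupp : forall j, w 0 j != 0 -> pk k j.
  move=> j; apply: contraNT => nj; have := congr1 (fun r : 'rV_n => r 0 j) wH.
  rewrite !mxE big1 => [/esym/eqP|i _]; last by rewrite mxE (negPf nj) andbF mulr0.
  by rewrite mulf_eq0 (negPf mu0).
have qw : qf A w = mu * n2 w.
  by rewrite (@qf_restr C n R (pk k) Cs w wsupp) ?(qf_eig wH) // => a /andP[].
pose u := map_mx normr w.
have n2u : n2 u = n2 w by apply: eq_bigr => i _; rewrite mxE normr_id.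
have qu : qf A u = l * n2 u.
  apply/le_anti; rewrite Hb /=.
  rewrite n2u; apply: le_trans (ler_wpM2r (n2_ge0 w) le_lmu) _.
  rewrite -qw; apply: le_trans (real_ler_norm _) _.
    by rewrite qw rpredM // ger0_real // n2_ge0.
  rewrite !qfE; apply: le_trans (ler_norm_sum _ _ _) _; apply: ler_sum => a _.
  apply: le_trans (ler_norm_sum _ _ _) _; apply: ler_sum => b _.
  by rewrite !normrM norm_conjC !mxE conj_normC normr_nat.
have uA := Hk u qu.
have step : forall a b, (Cs a && (w 0 a != 0)) -> e a b -> (Cs b && (w 0 b != 0)).
  move=> a b /andP[ca wa] eab; have cb := Cs_closed ca eab; rewrite cb /=.
  have := congr1 (fun r : 'rV_n => r 0 b) uA; rewrite !mxE => E.
  have : 0 < l * `|w 0 b|.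
    rewrite -E; apply: lt_le_trans (ge_term a _); last first.
      by move=> i; rewrite mxE mulr_ge0 // Amat_ge0.
    by rewrite !mxE ca cb eab /= mulr1 normr_gt0.
  by apply: contraTneq => ->; rewrite normr0 mulr0 ltxx.
have [i1 wi1] : exists i, w 0 i != 0.
  apply: NNPP => H; move/eqP: wn0; apply; apply/rowP => i; rewrite mxE.
  by apply/eqP; apply: negbNE; apply/negP => ne; apply: H; exists i.
have /andP[ci1 rki1] := wsupp _ wi1.
have [w' [ckw' nw' nekw']] := nondom (nd ck).
have c1 : connect e i1 w' := connect_trans (connect_Rsym tol rki1) ckw'.
have /andP[_ ww'] := propagate step c1 (introT andP (conj ci1 wi1)).
have /andP[_ rkw'] := wsupp _ ww'.
by move: nekw'; rewrite (Re_ rkw') // eq_sym.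
Qed.

End Comp.


Section Final.
Variables (C : numClosedFieldType) (n : nat).

Lemma trq (W b : 'M[C]_n) :
  \tr (W *m (b *m adj b)) = \sum_m qf W (row m (adj b)).
Proof.
rewrite mulmxA mxtrace_mulC mulmxA /mxtrace; apply: eq_bigr => m _.
rewrite qfE mxE [RHS]exchange_big /=; apply: eq_bigr => j _.
rewrite mxE big_distrl /=; apply: eq_bigr => i _.
by rewrite /adj !mxE conjCK.
Qed.

Lemma tr1 (x : 'M[C]_1) : \tr x = x 0 0.
Proof. by rewrite /mxtrace big_ord1. Qed.

Lemma main_gen (R : rel 'I_n) : tolerance R ->
  (forall a : 'M[C]_n, inA R a -> psdA R a -> sosA R a) ->
  dominant_in_each_component R.
Proof.
move=> tol hyp x0; apply: NNPP => H0.
have nd : forall v, connect (graph_edge R) x0 v -> ~ dominant R v.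
  by move=> v c d; apply: H0; exists v.
pose A := Amat C R (Cs R x0).
have [l [lr [v vn0 vA] Hb Hk]] := core x0 (Amat_herm C tol (Cs R x0)).
have lpos := lam_pos nd lr Hb.
have vs := vsupp (negbT (gt_eqF lpos)) vA.
pose G k t := Cs R x0 k -> forall x : 'rV[C]_n, (forall i, x 0 i != 0 -> R k i) ->
   qf A x <= t * n2 x.
have [t [tr tl Ht]] : exists t, [/\ t \is Num.real, t < l & forall k, G k t].
  apply: (sep lr).
    move=> k t t' le Gt ck x xs; apply: le_trans (Gt ck x xs) _.
    by apply: ler_wpM2r => //; apply: n2_ge0.
  move=> k; case ck: (Cs R x0 k); last first.
    exists (l - 1); last by rewrite /G ck.
    by split; [rewrite rpredB ?rpred1 | rewrite gtrDl ltrN10].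
  have [mu [mur [w wn0 wH] Hbk _]] := core k (Amat_herm C tol (pk R x0 k)).
  exists mu; first by split => //; apply: (mu_lt tol nd ck lr Hb Hk mur wn0 wH).
  move=> _ x xs; rewrite /A (@qf_restr C n R (pk R x0 k) (Cs R x0) x) //.
    move=> i /xs rki; apply/andP; split => //; exact: (Cs_R tol ck rki).
  by move=> a /andP[].
pose D : 'M[C]_n := diag_mx (\row_j ((Cs R x0 j)%:R : C)).
pose W := t *: D - A.
pose M := cjr v *m v.
have psdM : psd M.
  split.
    apply/matrixP => i j; rewrite /adj /M !mxE !big_ord1 !mxE.
    by rewrite rmorphM /= conjCK mulrC.
  move=> z; rewrite /M /cjr mulmxA -trmx_mul -map_mxM -mulmxA.
  by rewrite !mxE big_ord1 !mxE mulrC mul_conjC_ge0.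
have [m [b [bin aE]]] := hyp (Tmap R M) (ex_intro _ M erefl)
   (ex_intro _ M (conj psdM erefl)).
have PhiT X : \tr (W *m Tmap R X) = \tr (W *m X).
  rewrite /mxtrace; apply: eq_bigr => i _; rewrite mxE [RHS]mxE; apply: eq_bigr => j _.
  rewrite [Tmap _ _ _ _]mxE; case: ifP => // rji.
  have nij : (i == j) = false.
    by apply: contraFF rji => /eqP ->; rewrite (Rrefl tol).
  suff -> : W i j = 0 by rewrite !mul0r.
  by rewrite /W /A !mxE nij /graph_edge (Rsym tol) rji !andbF mulr0n mulr0 subr0.
have qD (x : 'rV[C]_n) : (forall i, x 0 i != 0 -> Cs R x0 i) -> qf D x = n2 x.
  move=> xs; rewrite qf_diag; apply: eq_bigr => i _; rewrite mxE.
  have [->|/xs ->] := eqVneq (x 0 i) 0; first by rewrite normr0 exprS !mul0r mulr0.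
  by rewrite mul1r.
have PhiM : \tr (W *m M) < 0.
  rewrite /M mulmxA mxtrace_mulC tr1 mulmxA.
  change (qf W v < 0); rewrite /W qf_lin (qD v) ?(qf_eig vA).
    by rewrite -mulrBl pmulr_llt0 ?subr_lt0 // n2_gt0.
  by move=> i; apply: contraNT => /vs ->; rewrite eqxx.
have local c m' : 0 <= qf W (row m' (adj (Tmap R c))).
  set x := row m' _.
  have xs : forall i, x 0 i != 0 -> R m' i.
    move=> i; rewrite /x /adj !mxE; case: ifP => [r _|_]; first by rewrite (Rsym tol).
    by rewrite conjC0 eqxx.
  rewrite /W qf_lin; case cm: (Cs R x0 m').
    rewrite (qD x); last by move=> i /xs r; exact: (Cs_R tol cm r).
    by rewrite subr_ge0; exact: (Ht m' cm x xs).
  have ncs : forall i, x 0 i != 0 -> ~~ Cs R x0 i.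
    move=> i /xs r; apply/negP => ci.
    by rewrite (Rsym tol) in r; have := Cs_R tol ci r; rewrite cm.
  have -> : qf D x = 0.
    rewrite qf_diag big1 // => i _; rewrite mxE.
    have [->|/ncs /negPf ->] := eqVneq (x 0 i) 0; last by rewrite mul0r.
    by rewrite normr0 exprS !mul0r mulr0.
  have -> : qf A x = 0.
    rewrite qfE big1 // => a _; rewrite big1 // => bb _.
    have [->|/ncs na] := eqVneq (x 0 a) 0; first by rewrite !mul0r.
    by rewrite [A a bb]mxE (negPf na) /= mulr0 mul0r.
  by rewrite mulr0 subr0.
have : 0 <= \tr (W *m Tmap R M).
  rewrite aE /starA mulmx_sumr raddf_sum; apply: sumr_ge0 => i _.
  change (0 <= \tr (W *m Tmap R (b i *m adj (b i)))).
  rewrite PhiT; have [c ->] := bin i; rewrite trq.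
  by apply: sumr_ge0 => m' _; apply: local.
by rewrite PhiT => h; have := lt_le_trans PhiM h; rewrite ltxx.
Qed.

End Final.


Theorem proposition4p15 (K : realType) (n : nat) (R : rel 'I_n) :
  tolerance R ->
  (forall a : 'M[complex K]_n, inA R a -> psdA R a -> sosA R a) ->
  dominant_in_each_component R.
Proof. exact: (@main_gen (complex K) n R). Qed.
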